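(* Let $P$ be a finite geometric lattice of rank $n$ with atom ordering $a_1<\dots<a_m$ and its associated minimal labeling, and let $S=\{s_1<\dots<s_k\}\subseteq\{1,\dots,n-1\}$. Consider any shelling of the order complex of $P^S$ obtained as a linear extension of the order on maximal chains $\gamma$ of $P^S$ given by comparing, lexicographically, the label sequences of $f_{first}(\gamma)$. Then the homology facets of this shelling are exactly those maximal chains $\gamma$ of $P^S$ for which $f_{rib}(f_{first}(\gamma))$ is a standard filling of $\mathrm{Rib}(s_1,s_2-s_1,\dots,n-s_k)$ whose reading word is an $\mathrm{NBC}^+$ basis of $P$.
   Context: The minimal labeling labels each cover relation $u\prec v$ by the atom $\min(A(v)\setminus A(u))$, where $A(x)$ is the set of atoms below $x$; the label sequence of a maximal chain $\hat0\prec u_1\prec\dots\prec\hat1$ is the sequence of its edge labels. $P^S$ is the subposet of elements with ranks in $S$. For a maximal chain $\gamma$ of $P^S$, $f_{first}(\gamma)$ is the maximal chain of $P$ containing $\gamma$ whose label sequence is lexicographically smallest. For a maximal chain $M$ of $P$, $f_{rib}(M)$ is the filling of $\mathrm{Rib}(s_1,\dots,n-s_k)$ whose reading word is the label sequence of $M$. A shelling is an order $F_1,F_2,\dots$ of facets such that each $\overline{F_j}\cap\bigcup_{i<j}\overline{F_i}$ is pure of codimension one in $\overline{F_j}$; a homology facet is one with $\overline{F_j}\cap\bigcup_{i<j}\overline{F_i}=\partial F_j$. $\mathrm{Rib}(r_1,\dots,r_p)$: ribbon with rows of lengths $r_1,\dots,r_p$ bottom to top, each row starting directly above the last box of the row below;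 reading word: left to right, bottom row to top; standard: entries increase in atom order left to right along rows and top to bottom down columns. NBC independent set: atoms $\{b_1,\dots,b_l\}$ whose join has rank $l$ and such that every atom outside the set below the join is later in the order than some $b_j$. $\mathrm{NBC}^+$ basis: ordered NBC independent set $(b_1,\dots,b_n)$ with $b_j=\min(A(b_1\vee\dots\vee b_j)\setminus A(b_1\vee\dots\vee b_{j-1}))$ for all $j$. *)

(* Defs.v *)
From HB Require Import structures.
From mathcomp Require Import all_boot all_order.
Set Implicit Arguments. Unset Strict Implicit. Unset Printing Implicit Defensive.
Import Order.Theory.

Section Geometric.
Context {disp : Order.disp_t} {L : finTBLatticeType disp}.

Definition covers (u v : L) : bool :=
  (u < v)%O && [forall z : L, ~~ ((u < z)%O && (z < v)%O)].

Definition atom (a : L) : bool := covers Order.bottom a.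

Definition is_rank (rk : L -> nat) : Prop :=
  rk Order.bottom = 0 /\ forall u v : L, covers u v -> rk v = (rk u).+1.

Definition semimodular (rk : L -> nat) : Prop :=
  forall x y : L, rk (Order.meet x y) + rk (Order.join x y) <= rk x + rk y.

Definition atomistic : Prop :=
  forall x : L, x = \big[Order.join/Order.bottom]_(a : L | atom a && (a <= x)%O) a.

Definition geometric (rk : L -> nat) : Prop :=
  is_rank rk /\ semimodular rk /\ atomistic.

(** an atom ordering a_1 < ... < a_m, given as the list [a_1; ...; a_m] *)
Definition atom_ordering (ao : seq L) : Prop :=
  uniq ao /\ forall a : L, (a \in ao) = atom a.

Definition aord (ao : seq L) (a b : L) : bool := index a ao < index b ao.

(** minimal labeling: lambda(u, v) = min (A(v) \ A(u)) in the atom order *)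
Definition minlab (ao : seq L) (u v : L) : L :=
  nth Order.bottom ao (find (fun a => (a <= v)%O && ~~ (a <= u)%O) ao).

(** maximal chain 0 = u_0 ≺ u_1 ≺ ... ≺ u_n = 1 of L, represented by [u_1; ...; u_n] *)
Definition maxchainP (M : seq L) : bool :=
  path covers Order.bottom M && (last Order.bottom M == Order.top).

Definition labels (ao : seq L) (M : seq L) : seq L :=
  pairmap (minlab ao) Order.bottom M.

Fixpoint lexlt (s t : seq nat) : bool :=
  match s, t with
  | [::], [::] => false
  | [::], _ :: _ => true
  | _ :: _, [::] => false
  | x :: s', y :: t' => (x < y) || ((x == y) && lexlt s' t')
  end.
Definition lexle (s t : seq nat) : bool := (s == t) || lexlt s t.

Definition labword (ao : seq L) (M : seq L) : seq nat :=
  map (fun a => index a ao) (labels ao M).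

(** chains of the rank-selected subposet P^S (S given as the list s) *)
Definition chainS (rk : L -> nat) (s : seq nat) (g : {set L}) : bool :=
  [forall x in g, rk x \in s] &&
  [forall x in g, forall y in g, (x <= y)%O || (y <= x)%O].

(** maximal chains of P^S (= facets of the order complex of P^S) *)
Definition maxchainS (rk : L -> nat) (s : seq nat) (g : {set L}) : bool :=
  chainS rk s g &&
  [forall g' : {set L}, (chainS rk s g' && (g \subset g')) ==> (g' == g)].

(** M = f_first(g): the maximal chain of P containing g with
    lexicographically smallest label sequence *)
Definition is_first (ao : seq L) (g : {set L}) (M : seq L) : Prop :=
  [/\ maxchainP M, {subset g <= Order.bottom :: M} &
      forall M' : seq L, maxchainP M' -> {subset g <= Order.bottom :: M'} ->
        lexle (labword ao M) (labword ao M')].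

(** the facet order F_1, F_2, ... (list F) is a linear extension of the order
    comparing lexicographically the label sequences of f_first *)
Definition first_linext (ao : seq L) (F : seq {set L}) : Prop :=
  forall i j, i < j < size F ->
  forall Mi Mj, is_first ao (nth set0 F i) Mi -> is_first ao (nth set0 F j) Mj ->
    ~~ lexlt (labword ao Mj) (labword ao Mi).

(** faces of closure(F_j) ∩ ⋃_{i<j} closure(F_i) *)
Definition earlier_face (F : seq {set L}) (j : nat) (G : {set L}) : Prop :=
  G \subset nth set0 F j /\ exists2 i, i < j & G \subset nth set0 F i.

(** shelling: each closure(F_j) ∩ ⋃_{i<j} closure(F_i) is pure of codimension one
    in closure(F_j) *)
Definition shelling (F : seq {set L}) : Prop :=
  forall j, j < size F -> forall G, earlier_face F j G ->
    exists H : {set L}, [/\ earlier_face F j H, G \subset H &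
                          #|H| = #|nth set0 F j| - 1].

(** homology facet: closure(F_j) ∩ ⋃_{i<j} closure(F_i) = ∂F_j *)
Definition homology_facet (F : seq {set L}) (j : nat) : Prop :=
  forall G : {set L}, G \subset nth set0 F j ->
    (earlier_face F j G <-> G \proper nth set0 F j).

Definition nbc_indep (rk : L -> nat) (ao : seq L) (b : seq L) : Prop :=
  let J := \big[Order.join/Order.bottom]_(x <- b) x in
  [/\ all atom b, uniq b, rk J = size b &
      forall a : L, atom a -> a \notin b -> (a <= J)%O ->
        exists2 bj, bj \in b & aord ao bj a].

Definition nbc_plus (rk : L -> nat) (ao : seq L) (b : seq L) : Prop :=
  nbc_indep rk ao b /\ size b = rk Order.top /\
  forall j, j < size b ->
    nth Order.bottom b j =
      minlab ao (\big[Order.join/Order.bottom]_(x <- take j b) x)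
                (\big[Order.join/Order.bottom]_(x <- take j.+1 b) x).

End Geometric.

(** Rib(r_1, ..., r_p): rows of lengths r_1..r_p from bottom to top,
    each row starting directly above the last box of the row below.
    Boxes are numbered 0..(sumn r)-1 in reading order (left to right, bottom row
    to top row).  Box k lies in row [rib_row r k] (0 = bottom row) and column
    [rib_col r k] (0 = leftmost column). *)
Definition rib_row (r : seq nat) (k : nat) : nat :=
  count (fun t => t <= k) (scanl addn 0 r).
Definition rib_col (r : seq nat) (k : nat) : nat := k - rib_row r k.

(** the composition (s_1, s_2 - s_1, ..., n - s_k) *)
Definition rib_comp (n : nat) (s : seq nat) : seq nat :=
  pairmap (fun a b => b - a) 0 (rcons s n).

Section Fillings.
Context {disp : Order.disp_t} {L : finTBLatticeType disp}.

(** f_rib: the filling of the ribbon whose reading word is w (box k gets w_k) *)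
Definition rib_fill (w : seq L) : nat -> L := fun k => nth Order.bottom w k.

Definition standard_filling (ao : seq L) (r : seq nat) (f : nat -> L) : Prop :=
  forall k l, k < sumn r -> l < sumn r ->
    (rib_row r k = rib_row r l -> rib_col r k < rib_col r l -> aord ao (f k) (f l)) /\
    (rib_col r k = rib_col r l -> rib_row r l < rib_row r k -> aord ao (f k) (f l)).
End Fillings.

(* Main.v *)
Require Import Defs.
From mathcomp Require Import all_boot all_order zify.
Set Implicit Arguments. Unset Strict Implicit. Unset Printing Implicit Defensive.
Import Order.Theory.

Section Lex.

Lemma lexlt_irr s : lexlt s s = false.
Proof. by elim: s => //= x s ->; rewrite ltnn eqxx. Qed.

Lemma lexlt_trans s t u : lexlt s t -> lexlt t u -> lexlt s u.
Proof.
elim: s t u => [|x s IH] [|y t] [|z u] //=.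
case/orP=> [xy|/andP[/eqP-> st]] /orP[yz|/andP[/eqP<- tu]].
- by rewrite (ltn_trans xy yz).
- by rewrite xy.
- by rewrite yz.
- by rewrite (IH _ _ st tu) eqxx orbT.
Qed.

Lemma lexlt_asym s t : lexlt s t -> lexlt t s -> False.
Proof. by move=> h1 h2; have := lexlt_trans h1 h2; rewrite lexlt_irr. Qed.

Lemma lexle_lt_trans s t u : lexle s t -> lexlt t u -> lexlt s u.
Proof. by case/orP=> [/eqP->//|h1 h2]; apply: lexlt_trans h1 h2. Qed.

Lemma lexle_trans s t u : lexle s t -> lexle t u -> lexle s u.
Proof.
case/orP=> [/eqP->//|h1] /orP[/eqP<-|h2]; first by rewrite /lexle h1 orbT.
by rewrite /lexle (lexlt_trans h1 h2) orbT.
Qed.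

Lemma lexle_total s t : lexle s t || lexle t s.
Proof.
rewrite /lexle; elim: s t => [|x s IH] [|y t] //=.
have [xy|xy|->] := ltngtP x y; rewrite ?eqxx //=.
  by rewrite orbT.
  by rewrite !orbT.
by rewrite !eqseq_cons eqxx /=; case/orP: (IH t) => /orP[->|->]; rewrite ?orbT // eq_sym => ->; rewrite orbT.
Qed.

Lemma lexlt_map (A B : nat -> nat) m k r : k <= r < k + m ->
  (forall q, k <= q < r -> A q = B q) -> A r < B r ->
  lexlt (map A (iota k m)) (map B (iota k m)).
Proof.
elim: m k => [|m IH] k; first by rewrite addn0 => /andP[h1 h2]; exfalso; lia.
move=> /andP[h1 h2] HE Hr /=.
case: (ltngtP k r) => [kr|rk|ekr].
- rewrite HE; last by rewrite leqnn kr.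
  rewrite eqxx ltnn /=; apply: (IH k.+1).
  + by apply/andP; split; lia.
  + by move=> q /andP[q1 q2]; apply: HE; rewrite q2; lia.
  + exact: Hr.
- lia.
- by subst r; rewrite Hr.
Qed.

End Lex.

Lemma incr_trans (g : nat -> nat) r q : r <= q ->
  (forall t, r <= t -> t < q -> g t < g t.+1) -> g r <= g q.
Proof.
elim: q => [|q IH]; first by rewrite leqn0 => /eqP->.
rewrite leq_eqVlt => /orP[/eqP->//|]; rewrite ltnS => rq H.
apply: leq_trans (IH rq _) (ltnW (H q rq (ltnSn q))).
by move=> t h1 h2; apply: H; rewrite // ltnW.
Qed.

Section Ribbon.
Variable n : nat.
Variable s : seq nat.
Hypothesis Hsort : sorted ltn s.
Hypothesis Hs : all (fun x => 0 < x < n) s.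

Lemma scan_pairmap x t : path leq x t ->
  scanl addn x (pairmap (fun a b => b - a) x t) = t.
Proof.
elim: t x => //= y t IH x /andP[xy pt].
by rewrite subnKC // IH.
Qed.

Lemma sumn_pairmap x t : path leq x t ->
  sumn (pairmap (fun a b => b - a) x t) + x = last x t.
Proof.
elim: t x => //= y t IH x /andP[xy pt].
by have := IH y pt; have := subnK xy; lia.
Qed.

Lemma path_s : path leq 0 (rcons s n).
Proof.
rewrite rcons_path; apply/andP; split.
  rewrite path_sortedE; last exact: leq_trans.
  apply/andP; split; first by apply/allP => y _.
  by apply: sub_sorted Hsort => a b /ltnW.
have := mem_last 0 s; rewrite inE => /orP[/eqP->//|].
by move/(allP Hs) => /andP[_ /ltnW].
Qed.

Let r := rib_comp n s.

Lemma sumn_r : sumn r = n.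
Proof. by have := sumn_pairmap path_s; rewrite addn0 last_rcons. Qed.

Definition R k := count (fun t => t <= k) s.

Lemma row_R k : k < n -> rib_row r k = R k.
Proof.
move=> kn; rewrite /rib_row scan_pairmap ?path_s // -cats1 count_cat /= addn0.
by rewrite leqNgt kn addn0.
Qed.

Lemma suniq : uniq s.
Proof. by apply: (sorted_uniq ltn_trans ltnn). Qed.

Lemma cnt_step (l : seq nat) k : count (fun t => t <= k.+1) l = count (fun t => t <= k) l + count_mem k.+1 l.
Proof.
elim: l => //= y l ->.
case: (ltngtP y k.+1) => [h|h|e].
- have h2 : y <= k by [].
  rewrite h2 /=; lia.
- have h2 : (y <= k) = false by rewrite leqNgt ltnW.
  rewrite h2 /=; lia.
- subst y; rewrite ltnn /=; lia.
Qed.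

Lemma R_step k : R k.+1 = R k + (k.+1 \in s).
Proof. by rewrite /R cnt_step count_uniq_mem // suniq. Qed.

Lemma R0 : R 0 = 0.
Proof.
rewrite /R (eq_in_count (a2 := pred0)) ?count_pred0 // => y /(allP Hs) /andP[y0 _].
by rewrite /= leqNgt y0.
Qed.

Lemma R_le k : R k <= k.
Proof. elim: k => [|k IH]; first by rewrite R0. by rewrite R_step; case: (k.+1 \in s); lia. Qed.

Lemma R_mono k d : R k <= R (k + d).
Proof. elim: d => [|d IH]; first by rewrite addn0. by rewrite addnS R_step; lia. Qed.

Definition C k := k - R k.

Lemma C_step k : C k.+1 = C k + (k.+1 \notin s).
Proof. rewrite /C R_step; have := R_le k; case: (k.+1 \in s) => /=; lia. Qed.

Lemma C_mono k d : C k <= C (k + d).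
Proof. elim: d => [|d IH]; first by rewrite addn0. by rewrite addnS C_step; lia. Qed.

Lemma R_flat k d : R k = R (k + d) -> forall i, 0 < i <= d -> k + i \notin s.
Proof.
move=> E i /andP[i0 id]; apply/negP => hs.
have h1 := R_mono k i.-1.
have h2 := R_mono (k + i) (d - i).
have e : k + i = (k + i.-1).+1 by lia.
have E1 : R (k + i) = R (k + i.-1) + 1 by rewrite e R_step -e hs.
have E2 : k + i + (d - i) = k + d by lia.
rewrite E2 in h2; lia.
Qed.

Lemma C_flat k d : C k = C (k + d) -> forall i, 0 < i <= d -> k + i \in s.
Proof.
move=> E i /andP[i0 id]; case: (boolP (k + i \in s)) => // hs; exfalso.
have h1 := C_mono k i.-1.
have h2 := C_mono (k + i) (d - i).
have e : k + i = (k + i.-1).+1 by lia.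
have E1 : C (k + i) = C (k + i.-1) + 1 by rewrite e C_step -e hs.
have E2 : k + i + (d - i) = k + d by lia.
rewrite E2 in h2; lia.
Qed.

Definition stdg (g : nat -> nat) := forall k l, k < sumn r -> l < sumn r ->
  (rib_row r k = rib_row r l -> rib_col r k < rib_col r l -> g k < g l) /\
  (rib_col r k = rib_col r l -> rib_row r l < rib_row r k -> g k < g l).

Lemma rib_R1 g : stdg g -> forall x, x \in s -> g x < g x.-1.
Proof.
move=> H x xs; have /andP[x0 xn] := allP Hs x xs.
have x1n : x.-1 < n by apply: leq_ltn_trans (leq_pred x) xn.
have k1 : x < sumn r by rewrite sumn_r.
have k2 : x.-1 < sumn r by rewrite sumn_r.
have [_ h] := H x x.-1 k1 k2.
have e : x = x.-1.+1 by rewrite prednK.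
have Ex : R x = R x.-1 + 1 by rewrite {1}e R_step -e xs.
have r1 : rib_row r x = R x by apply: row_R.
have r2 : rib_row r x.-1 = R x.-1 by apply: row_R.
apply: h; rewrite /rib_col r1 r2 Ex.
  lia.
by rewrite addn1.
Qed.

Lemma decr_chain (g : nat -> nat) l k : l < k ->
  (forall t, l < t -> t <= k -> g t < g t.-1) -> g k < g l.
Proof.
elim: k => // k IH; rewrite ltnS leq_eqVlt => /orP[/eqP->|lk] H.
  by have := H k.+1 (ltnSn k) (leqnn _).
have h1 : g k.+1 < g k by apply: H; [exact: ltn_trans lk (ltnSn k) | exact: leqnn].
have h2 : g k < g l := IH lk (fun t t1 t2 => H t t1 (leqW t2)).
exact: ltn_trans h1 h2.
Qed.

Lemma rib_R2 g : (forall x, x \in s -> g x < g x.-1) ->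
  (forall x, 0 < x < n -> x \notin s -> g x.-1 < g x) -> stdg g.
Proof.
move=> Hd Ha k l; rewrite sumn_r => kn ln; rewrite /rib_col !row_R //.
split => E1 E2.
- have kl : k < l.
    rewrite ltnNge; apply/negP => lk.
    have := C_mono l (k - l); rewrite subnKC // /C; lia.
  have Ed : R k = R (k + (l - k)) by rewrite subnKC // ltnW.
  have hflat := R_flat Ed.
  have hk1 : 0 < k.+1 < n by apply/andP; split; [done | apply: leq_ltn_trans kl ln].
  have hk1s : k.+1 \notin s.
    by have := hflat 1; rewrite addn1; apply; apply/andP; split => //; rewrite subn_gt0.
  have step : g k < g k.+1 := Ha k.+1 hk1 hk1s.
  apply: leq_trans step _.
  apply: incr_trans => // t h1 h2.
  have ht : 0 < t.+1 < n by apply/andP; split; [done | apply: leq_ltn_trans h2 ln].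
  have hts : t.+1 \notin s.
    have := hflat (t.+1 - k); rewrite subnKC; last by apply: leq_trans (leqnSn k) _; apply: leq_trans h1 (leqnSn t).
    by apply; apply/andP; split; [rewrite subn_gt0; apply: leq_trans h1 _ | rewrite leq_sub2r].
  exact: (Ha t.+1 ht hts).
- have lk : l < k.
    rewrite ltnNge; apply/negP => kl.
    have h := R_mono k (l - k); rewrite (subnKC kl) in h.
    by rewrite ltnNge h in E2.
  have Ed : C l = C (l + (k - l)) by rewrite (subnKC (ltnW lk)) /C.
  have hflat := C_flat Ed.
  apply: decr_chain => // t h1 h2; apply: Hd.
  have := hflat (t - l); rewrite subnKC; last by apply: ltnW.
  by apply; lia.
Qed.

End Ribbon.

Section Basic.
Context {disp : Order.disp_t} {L : finTBLatticeType disp}.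
Variable rk : L -> nat.
Hypothesis Hrk : is_rank rk.

Local Notation bot := (Order.bottom : L).
Local Notation top := (Order.top : L).

Definition ivl (x y : L) := #|[set w : L | (x < w)%O && (w <= y)%O]|.

Lemma ivl_lt x z y : (x < z)%O -> (z <= y)%O -> ivl z y < ivl x y.
Proof.
move=> xz zy; rewrite /ivl; apply: proper_card; apply/properP; split.
  by apply/subsetP=> w; rewrite !inE => /andP[zw wy]; rewrite (lt_trans xz zw) wy.
by exists z; rewrite !inE ?ltxx // xz zy.
Qed.

Lemma ivl_lt2 x w y : (x < y)%O -> (w < y)%O -> ivl x w < ivl x y.
Proof.
move=> xy wy; rewrite /ivl; apply: proper_card; apply/properP; split.
  by apply/subsetP=> v; rewrite !inE => /andP[xv vw]; rewrite xv (le_trans vw (ltW wy)).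
exists y; rewrite !inE xy /=; [exact: lexx | apply/negP => yw; by have := lt_le_trans wy yw; rewrite ltxx].
Qed.

Lemma cover_below (x y : L) : (x < y)%O -> exists2 z, covers x z & (z <= y)%O.
Proof.
have [k Hk] : exists k, ivl x y < k by exists (ivl x y).+1.
elim: k y Hk => // k IH y Hk xy.
case: (boolP [exists w, (x < w)%O && (w < y)%O]).
  move/existsP=> [w /andP[xw wy]].
  have [|z xz zw] := IH w _ xw.
    by apply: leq_trans (ivl_lt2 xy wy) _.
  by exists z => //; apply: le_trans zw (ltW wy).
move=> H; exists y => //; rewrite /covers xy /=; apply/forallP => z.
by apply/negP => Hz; apply: (negP H); apply/existsP; exists z.
Qed.

Lemma rk_lt (x y : L) : (x < y)%O -> rk x < rk y.
Proof.
have [k Hk] : exists k, ivl x y < k by exists (ivl x y).+1.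
elim: k x Hk => // k IH x Hk xy.
have [z xz zy] := cover_below xy.
have rz := Hrk.2 _ _ xz.
move: zy; rewrite le_eqVlt => /orP[/eqP<-|zy]; first by rewrite rz.
have xz' : (x < z)%O by case/andP: xz.
have h := IH z (leq_trans (ivl_lt xz' (ltW zy)) Hk) zy; lia.
Qed.

Lemma rk_le (x y : L) : (x <= y)%O -> rk x <= rk y.
Proof. by rewrite le_eqVlt => /orP[/eqP->//|/rk_lt/ltnW]. Qed.

Lemma rk_eq_le (x y : L) : (x <= y)%O -> rk x = rk y -> x = y.
Proof.
rewrite le_eqVlt => /orP[/eqP->//|/rk_lt]; by move=> H E; rewrite E ltnn in H.
Qed.

Lemma rk_cmp_eq (x y : L) : ((x <= y)%O || (y <= x)%O) -> rk x = rk y -> x = y.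
Proof. by case/orP=> H E; [apply: rk_eq_le | symmetry; apply: rk_eq_le]. Qed.

Lemma rk_cover (x y : L) : (x <= y)%O -> rk y = (rk x).+1 -> covers x y.
Proof.
move=> xy E; rewrite /covers.
have xy' : (x < y)%O by rewrite lt_neqAle xy andbT; apply/eqP=> exy; rewrite exy in E; lia.
rewrite xy' /=; apply/forallP=> z; apply/negP=> /andP[/rk_lt h1 /rk_lt h2]; lia.
Qed.

Lemma rk_bot : rk bot = 0. Proof. exact: Hrk.1. Qed.

Lemma atom_rk (a : L) : atom a -> rk a = 1.
Proof. by move=> /(Hrk.2 _ _); rewrite rk_bot. Qed.

Lemma atom_meet (a u : L) : atom a -> ~~ (a <= u)%O -> Order.meet a u = bot.
Proof.
move=> /andP[_ /forallP H] au.
have : (Order.meet a u < a)%O.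
  by rewrite lt_neqAle leIl andbT; apply/eqP=> E; move: au; rewrite -E leIr.
move=> lt; have := H (Order.meet a u); rewrite lt andbT.
by rewrite lt_neqAle le0x andbT negbK eq_sym => /eqP.
Qed.


Hypothesis Hgeom : geometric rk.

Lemma join_atom_covers (a u : L) : atom a -> ~~ (a <= u)%O -> covers u (Order.join u a).
Proof.
move=> Ha au.
have sm := (Hgeom.2.1 u a).
rewrite meetC atom_meet // rk_bot (atom_rk Ha) in sm.
have lt : (u < Order.join u a)%O.
  rewrite lt_neqAle leUl andbT; apply/eqP=> E; move: au; by rewrite E leUr.
have := rk_lt lt => h.
apply: rk_cover; [exact: leUl | lia].
Qed.

Lemma covers_atom (u v : L) : covers u v ->
  exists a, [/\ atom a, (a <= v)%O & ~~ (a <= u)%O].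
Proof.
move=> /andP[uv _].
case: (boolP [exists a, [&& atom a, (a <= v)%O & ~~ (a <= u)%O]]).
  by move/existsP=> [a /and3P[h1 h2 h3]]; exists a.
move=> H; exfalso.
have : (v <= u)%O.
  rewrite {1}(Hgeom.2.2 v); apply/joinsP => a /andP[Ha av].
  case: (boolP (a <= u)%O) => // au; exfalso; apply: (negP H); apply/existsP.
  by exists a; rewrite Ha av au.
by move=> vu; move: (lt_le_trans uv vu); rewrite ltxx.
Qed.

Lemma covers_join (u v a : L) : covers u v -> atom a -> (a <= v)%O -> ~~ (a <= u)%O ->
  Order.join u a = v.
Proof.
move=> cuv Ha av au.
have c2 := join_atom_covers Ha au.
apply: rk_eq_le; first by rewrite leUx av; case/andP: cuv => /ltW ->.
by rewrite (Hrk.2 _ _ c2) (Hrk.2 _ _ cuv).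
Qed.

Variable ao : seq L.
Hypothesis Hao : atom_ordering ao.

Definition idx (a : L) := index a ao.

Lemma idx_inj (a b : L) : atom a -> atom b -> idx a = idx b -> a = b.
Proof.
move=> Ha Hb E; rewrite -(nth_index bot (s:=ao) (x:=a)); last by rewrite Hao.2.
by rewrite /idx in E; rewrite E nth_index // Hao.2.
Qed.

Lemma minlab_spec (u v : L) : covers u v ->
  [/\ atom (minlab ao u v), (minlab ao u v <= v)%O, ~~ (minlab ao u v <= u)%O &
      forall b, atom b -> (b <= v)%O -> ~~ (b <= u)%O -> idx (minlab ao u v) <= idx b].
Proof.
move=> cuv.
set p := (fun a : L => (a <= v)%O && ~~ (a <= u)%O).
have hp : has p ao.
  have [a [Ha av au]] := covers_atom cuv.
  by apply/hasP; exists a; rewrite ?Hao.2 // /p av au.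
have hf := nth_find bot hp.
have fs : find p ao < size ao by rewrite -has_find.
have mem : minlab ao u v \in ao by rewrite /minlab mem_nth.
have ix : idx (minlab ao u v) = find p ao by rewrite /idx /minlab index_uniq //; case: Hao.
move: hf; rewrite /p -/(minlab ao u v) => /andP[h1 h2].
split => //; first by rewrite -Hao.2.
move=> b Hb bv bu; rewrite ix leqNgt; apply/negP => lt.
have := before_find bot lt; rewrite nth_index ?Hao.2 // /p bv bu.
by [].
Qed.


Local Notation n := (rk top).

Definition U (M : seq L) (r : nat) : L := nth bot (bot :: M) r.

Lemma maxchain_cov (M : seq L) r : maxchainP M -> r < size M -> covers (U M r) (U M r.+1).
Proof. by move=> /andP[/(pathP bot) H _] /H. Qed.

Lemma maxchain_top (M : seq L) : maxchainP M -> U M (size M) = top.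
Proof. by move=> /andP[_ /eqP]; rewrite (last_nth bot). Qed.

Lemma maxchain_rk (M : seq L) r : maxchainP M -> r <= size M -> rk (U M r) = r.
Proof.
move=> HM; elim: r => [|r IH] h; first exact: rk_bot.
by rewrite (Hrk.2 _ _ (maxchain_cov HM h)) IH // ltnW.
Qed.

Lemma maxchain_size (M : seq L) : maxchainP M -> size M = n.
Proof. by move=> HM; rewrite -(maxchain_top HM) maxchain_rk. Qed.

Lemma U_mono (M : seq L) r q : maxchainP M -> r <= q -> q <= size M -> (U M r <= U M q)%O.
Proof.
move=> HM rq; elim: q rq => [|q IH]; first by rewrite leqn0 => /eqP->.
rewrite leq_eqVlt => /orP[/eqP-> _|]; first exact: lexx.
rewrite ltnS => rq qs; apply: le_trans (IH rq (ltnW qs)) _.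
by case/andP: (maxchain_cov HM qs) => /ltW.
Qed.

Lemma mem_U (M : seq L) (x : L) : maxchainP M -> x \in bot :: M -> rk x <= size M /\ x = U M (rk x).
Proof.
move=> HM /(nthP bot) [i hi <-]; rewrite -/(U M i) maxchain_rk //.
Qed.

Lemma U_in (M : seq L) r : r <= size M -> U M r \in bot :: M.
Proof. by move=> h; rewrite /U mem_nth. Qed.

Definition chainf (f : nat -> L) :=
  [/\ f 0 = bot, f n = top & forall r, r < n -> covers (f r) (f r.+1)].

Definition mk (f : nat -> L) : seq L := map f (iota 1 n).

Lemma U_mk f r : f 0 = bot -> r <= n -> U (mk f) r = f r.
Proof.
move=> f0; case: r => [|r] h; first by rewrite /U /= f0.
by rewrite /U /= /mk (nth_map 0) ?size_iota // nth_iota.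
Qed.

Lemma size_mk f : size (mk f) = n.
Proof. by rewrite size_map size_iota. Qed.

Lemma mk_max f : chainf f -> maxchainP (mk f).
Proof.
case=> f0 fn fc; apply/andP; split.
  apply/(pathP bot) => i; rewrite size_mk => hi.
  by rewrite -/(U (mk f) i) -[nth bot (mk f) i]/(U (mk f) i.+1) !U_mk // ?fc // ltnW.
by rewrite (last_nth bot) -/(U _ _) size_mk U_mk // fn.
Qed.

Lemma U_chainf (M : seq L) : maxchainP M -> chainf (U M).
Proof.
move=> HM; have sz := maxchain_size HM; split => //.
  by rewrite -sz maxchain_top.
by move=> r; rewrite -sz => /(maxchain_cov HM).
Qed.

Definition lab (M : seq L) r := minlab ao (U M r) (U M r.+1).

Definition wf (f : nat -> L) := map (fun r => idx (minlab ao (f r) (f r.+1))) (iota 0 n).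

Lemma labels_lab (M : seq L) : labels ao M = map (lab M) (iota 0 (size M)).
Proof.
apply: (eq_from_nth (x0 := bot)); first by rewrite size_pairmap size_map size_iota.
move=> i; rewrite size_pairmap => hi.
by rewrite (nth_pairmap bot) // (nth_map 0) ?size_iota // nth_iota.
Qed.

Lemma labword_U (M : seq L) : maxchainP M -> labword ao M = wf (U M).
Proof.
move=> HM; rewrite /labword labels_lab -map_comp (maxchain_size HM).
by apply: eq_map.
Qed.

Lemma labword_mk f : chainf f -> labword ao (mk f) = wf f.
Proof.
move=> cf; rewrite labword_U; last exact: mk_max.
rewrite /wf; apply/eq_in_map => r; rewrite mem_iota add0n => /andP[_ h].
case: cf => f0 _ _; by rewrite !U_mk // ltnW.
Qed.


Lemma lab_spec (M : seq L) r : maxchainP M -> r < n ->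
  [/\ atom (lab M r), (lab M r <= U M r.+1)%O, ~~ (lab M r <= U M r)%O &
      forall b, atom b -> (b <= U M r.+1)%O -> ~~ (b <= U M r)%O -> idx (lab M r) <= idx b].
Proof. by move=> HM hr; apply: minlab_spec; apply: maxchain_cov; rewrite ?(maxchain_size HM). Qed.

Lemma lab_join (M : seq L) r : maxchainP M -> r < n -> Order.join (U M r) (lab M r) = U M r.+1.
Proof.
move=> HM hr; have [h1 h2 h3 _] := lab_spec HM hr.
by apply: covers_join => //; apply: maxchain_cov; rewrite ?(maxchain_size HM).
Qed.

Lemma lab_neq (M : seq L) r q : maxchainP M -> r < q -> q < n -> lab M r != lab M q.
Proof.
move=> HM rq qn; have [_ h1 _ _] := lab_spec HM (ltn_trans rq qn).
have [_ _ h2 _] := lab_spec HM qn.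
apply/eqP=> E; apply: (negP h2); rewrite -E; apply: le_trans h1 _.
by apply: U_mono => //; rewrite (maxchain_size HM) ltnW.
Qed.

Lemma idx_lab_neq (M : seq L) r q : maxchainP M -> r < q -> q < n -> idx (lab M r) != idx (lab M q).
Proof.
move=> HM rq qn; apply/eqP=> E; apply: (negP (lab_neq HM rq qn)); apply/eqP.
apply: idx_inj E; [by case: (lab_spec HM (ltn_trans rq qn)) | by case: (lab_spec HM qn)].
Qed.

Lemma crossing (P : nat -> bool) r b : r <= b -> ~~ P r -> P b ->
  exists q, [/\ r <= q, q < b, ~~ P q & P q.+1].
Proof.
elim: b => [|b IH]; first by rewrite leqn0 => /eqP-> /negP.
rewrite leq_eqVlt => /orP[/eqP->|]; first by move=> /negP.
rewrite ltnS => rb nPr Pb; case: (boolP (P b)) => Pb'.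
  by have [q [h1 h2 h3 h4]] := IH rb nPr Pb'; exists q; split => //; apply: ltnW.
by exists b.
Qed.


Lemma greedy (M : seq L) a r b c : maxchainP M -> a <= r -> r < b -> b <= n ->
  (forall q, a <= q -> q.+1 < b -> idx (lab M q) < idx (lab M q.+1)) ->
  atom c -> (c <= U M b)%O -> ~~ (c <= U M r)%O -> idx (lab M r) <= idx c.
Proof.
move=> HM ar rb bn Hinc Hc cb cr.
have [q [rq qb nq pq]] := crossing (P := fun t => (c <= U M t)%O) (ltnW rb) cr cb.
have [_ _ _ hmin] := lab_spec HM (leq_trans qb bn).
apply: leq_trans (hmin _ Hc pq nq).
apply: (incr_trans (g := fun t => idx (lab M t))) => // t h1 h2.
by apply: Hinc; [apply: leq_trans h1 | apply: leq_ltn_trans qb].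
Qed.

Lemma chain_cmp (M : seq L) x y : maxchainP M -> x \in bot :: M -> y \in bot :: M ->
  (x <= y)%O || (y <= x)%O.
Proof.
move=> HM /(mem_U HM) [hx ->] /(mem_U HM) [hy ->].
by case: (leqP (rk x) (rk y)) => h; [rewrite U_mono | rewrite orbC U_mono // ltnW].
Qed.

Lemma ext_chain k (x : L) (g : {set L}) : n - rk x < k ->
  {in g &, forall y z, (y <= z)%O || (z <= y)%O} -> {in g, forall y, (x <= y)%O} ->
  exists p, [/\ path covers x p, last x p = top & {subset g <= x :: p}].
Proof.
elim: k x g => // k IH x g hk Hcmp Hx.
case: (eqVneq x top) => [ext|xt].
  exists [::]; rewrite ext; split => // y yg; rewrite inE; apply/eqP; apply: le_anti.
  by rewrite lex1 -ext (Hx y yg).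
have xlt : (x < top)%O by rewrite lt_neqAle xt lex1.
have rxn := rk_lt xlt.
have [m [xm mgx]] : exists m, (x < m)%O /\ {in (g :\ x), forall y, (m <= y)%O}.
  case: (set_0Vmem (g :\ x)) => [g0|[y0 y0in]].
    by exists top; split => // y; rewrite g0 inE.
  case: (@arg_minnP _ y0 (fun i => i \in g :\ x) rk y0in) => m min_in min_le.
  move: (min_in); rewrite /= !inE => /andP[mx mg].
  exists m; split; first by rewrite lt_neqAle eq_sym mx Hx.
  move=> y yin; move: (yin); rewrite inE => /andP[_ yg].
  case/orP: (Hcmp _ _ mg yg) => // ym.
  by rewrite (@rk_eq_le y m ym) //; apply/eqP; rewrite eqn_leq rk_le // min_le.
have [z xz zm] := cover_below xm.
have rz := Hrk.2 _ _ xz.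
have [|||p [h1 h2 h3]] := IH z (g :\ x).
- lia.
- by move=> y1 y2 /setD1P[_ h1] /setD1P[_ h2]; apply: Hcmp.
- by move=> y yin; apply: le_trans zm (mgx y yin).
exists (z :: p); split => //=; first by rewrite xz.
move=> y yg; rewrite inE; case: (eqVneq y x) => //= yx.
by apply: h3; apply/setD1P.
Qed.

Lemma chain_ext (g : {set L}) : {in g &, forall y z, (y <= z)%O || (z <= y)%O} ->
  exists M, maxchainP M /\ {subset g <= bot :: M}.
Proof.
move=> Hcmp; have [p [h1 h2 h3]] := @ext_chain (n.+1) bot g (leq_ltn_trans (leq_subr _ _) (ltnSn _)) Hcmp (fun y _ => le0x y).
by exists p; split => //; rewrite /maxchainP h1 h2 eqxx.
Qed.

Lemma list_min (T : eqType) (key : T -> seq nat) (l : seq T) : l != [::] ->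
  exists2 m, m \in l & forall y, y \in l -> lexle (key m) (key y).
Proof.
elim: l => // a l IH _; case: (eqVneq l [::]) => [->|ln].
  by exists a; rewrite ?inE // => y; rewrite inE => /eqP->; rewrite /lexle eqxx.
have [m ml mmin] := IH ln.
case/orP: (lexle_total (key a) (key m)) => h.
  exists a; rewrite ?inE ?eqxx // => y; rewrite inE => /orP[/eqP->|yl].
    by rewrite /lexle eqxx.
  by apply: lexle_trans h (mmin y yl).
exists m; rewrite ?inE ?ml ?orbT // => y; rewrite inE => /orP[/eqP->//|yl].
exact: mmin.
Qed.

Lemma first_exists (g : {set L}) : {in g &, forall y z, (y <= z)%O || (z <= y)%O} ->
  exists M, is_first ao g M.
Proof.
move=> Hcmp.
pose P (M : seq L) := maxchainP M && [forall x in g, x \in bot :: M].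
pose cands := [seq M <- map (@tval n L) (enum {: n.-tuple L}) | P M].
have incand : forall M, maxchainP M -> {subset g <= bot :: M} -> M \in cands.
  move=> M HM Hs; rewrite mem_filter; apply/andP; split.
    by rewrite /P HM; apply/forallP => x; apply/implyP => /Hs.
  apply/mapP; exists (Tuple (introT eqP (maxchain_size HM))) => //.
  by rewrite mem_enum.
have [M0 [HM0 HS0]] := chain_ext Hcmp.
have : cands != [::] by apply/negP => /eqP E; have := incand _ HM0 HS0; rewrite E.
case/(list_min (labword ao)) => M Min Mmin.
move: (Min); rewrite mem_filter => /andP[/andP[HM /forallP HS] _].
exists M; split => //.
  by move=> x xg; have := HS x; rewrite xg.
by move=> M' HM' HS'; apply: Mmin; apply: incand.
Qed.


Variable s : seq nat.
Hypothesis Hs : all (fun x => 0 < x < n) s.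

Lemma s_range x : x \in s -> 0 < x < n.
Proof. by move/(allP Hs). Qed.

Definition sel (M : seq L) := [set x : L | (x \in M) && (rk x \in s)].

Lemma U_inM (M : seq L) r : maxchainP M -> 0 < r <= n -> U M r \in M.
Proof.
move=> HM /andP[r0 rn]; have := U_in (M := M) (r := r); rewrite (maxchain_size HM) => /(_ rn).
rewrite inE => /orP[/eqP E|//]; have := maxchain_rk HM (r := r); rewrite (maxchain_size HM) E rk_bot => /(_ rn) E2.
by rewrite -E2 in r0.
Qed.

Lemma sel_U (M : seq L) r : maxchainP M -> r \in s -> U M r \in sel M.
Proof.
move=> HM rs; have /andP[r0 rn] := s_range rs.
have hr : 0 < r <= n by rewrite r0 ltnW.
rewrite inE (U_inM HM hr) /=.
have hr' : r <= size M by rewrite (maxchain_size HM) ltnW.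
by rewrite (maxchain_rk HM hr').
Qed.

Lemma sel_inv (M : seq L) x : maxchainP M -> x \in sel M -> rk x \in s /\ x = U M (rk x).
Proof.
move=> HM; rewrite inE => /andP[xM xs]; split => //.
by case: (mem_U HM (x := x)); rewrite ?inE ?xM ?orbT.
Qed.

Lemma sel_maxS (M : seq L) : maxchainP M -> maxchainS rk s (sel M).
Proof.
move=> HM.
have ch : chainS rk s (sel M).
  apply/andP; split.
    by apply/forall_inP => x /(sel_inv HM) [].
  apply/forall_inP => x xs; apply/forall_inP => y ys.
  apply: (chain_cmp HM); rewrite inE; apply/orP; right.
    by move: xs; rewrite inE => /andP[].
  by move: ys; rewrite inE => /andP[].
rewrite /maxchainS ch /=; apply/forallP => g'; apply/implyP => /andP[/andP[h1 h2] sub].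
rewrite eqEsubset sub andbT; apply/subsetP => z zg'.
have zs : rk z \in s by move/forall_inP: h1; apply.
have yin := sel_U HM zs.
have yg' : U M (rk z) \in g' by move/subsetP: sub; apply.
have cmp : (z <= U M (rk z))%O || (U M (rk z) <= z)%O.
  by move/forall_inP: h2 => /(_ z zg') /forall_inP /(_ _ yg').
rewrite (rk_cmp_eq cmp) //.
have /andP[_ zn] := s_range zs.
by rewrite maxchain_rk // (maxchain_size HM) ltnW.
Qed.

Lemma maxS_cmp (g : {set L}) : maxchainS rk s g -> {in g &, forall y z, (y <= z)%O || (z <= y)%O}.
Proof.
by move=> /andP[/andP[_ /forall_inP h] _] y z yg zg; move: (h y yg) => /forall_inP; apply.
Qed.

Lemma sel_eq (g : {set L}) (M : seq L) : maxchainS rk s g -> maxchainP M ->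
  {subset g <= bot :: M} -> g = sel M.
Proof.
move=> Hg HM sub; have /andP[/andP[/forall_inP h1 _] /forallP hmax] := Hg.
have := hmax (sel M); have /andP[chs _] := sel_maxS HM.
rewrite chs /= => /implyP H; apply/esym/eqP; apply: H.
apply/subsetP => x xg; rewrite inE h1 // andbT.
have := sub x xg; rewrite inE => /orP[/eqP E|//].
by have := h1 x xg; rewrite E rk_bot => /s_range.
Qed.

Lemma first_sel (g : {set L}) M : maxchainS rk s g -> is_first ao g M -> g = sel M.
Proof. by move=> Hg [HM sub _]; apply: sel_eq. Qed.

Definition sw (M : seq L) x r := if r == x then Order.join (U M x.-1) (lab M x) else U M r.

Lemma sw_chainf (M : seq L) x : maxchainP M -> 0 < x < n -> chainf (sw M x).
Proof.
move=> HM /andP[x0 xn]; have sz := maxchain_size HM.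
have [la lb lc _] := lab_spec HM xn.
have hle : (U M x.-1 <= U M x)%O by apply: (U_mono HM (leq_pred x)); rewrite sz ltnW.
have la' : ~~ (lab M x <= U M x.-1)%O by apply: contra lc => h; apply: le_trans h hle.
rewrite /chainf; split.
- by rewrite /sw; case: (eqVneq 0 x) => // E; rewrite -E in x0.
- rewrite /sw; case: (eqVneq n x) => [E|_]; first by rewrite E ltnn in xn.
  by have := maxchain_top HM; rewrite sz.
move=> r rn; rewrite /sw.
case: (eqVneq r x) => [->|rx].
  rewrite (gtn_eqF (ltnSn x)); apply: rk_cover.
    rewrite leUx lb andbT; apply: U_mono; rewrite ?sz //; lia.
  have := rk_le (leUl (U M x.-1) (lab M x)).
  rewrite (Hrk.2 _ _ (join_atom_covers la la')) !maxchain_rk ?sz //; lia.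
case: (eqVneq r.+1 x) => [E|rx1].
  have -> : r = x.-1 by rewrite -E.
  exact: join_atom_covers.
by apply: (maxchain_cov HM); rewrite sz.
Qed.

Lemma sw_neq (M : seq L) x : maxchainP M -> 0 < x < n -> sw M x x != U M x.
Proof.
move=> HM /andP[x0 xn]; have [_ _ lc _] := lab_spec HM xn.
rewrite /sw eqxx; apply/eqP => E; apply: (negP lc); rewrite -E; exact: leUr.
Qed.

Lemma sw_lt (M : seq L) x : maxchainP M -> 0 < x < n ->
  idx (lab M x) < idx (lab M x.-1) -> lexlt (wf (sw M x)) (labword ao M).
Proof.
move=> HM /andP[x0 xn] hlt; rewrite labword_U //.
have cf := sw_chainf HM (introT andP (conj x0 xn)).
have [la lb lc _] := lab_spec HM xn.
have hle : (U M x.-1 <= U M x)%O by apply: (U_mono HM (leq_pred x)); rewrite (maxchain_size HM) ltnW.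
have la' : ~~ (lab M x <= U M x.-1)%O by apply: contra lc => h; apply: le_trans h hle.
apply: (lexlt_map (r := x.-1)); first by apply/andP; split; lia.
  move=> q /andP[_ qx]; rewrite /sw.
  have h1 : q < x by lia.
  have h2 : q.+1 < x by lia.
  by rewrite (ltn_eqF h1) (ltn_eqF h2).
have h3 : x.-1 < x by lia.
rewrite /sw (ltn_eqF h3) prednK // eqxx.
have hlt' : idx (lab M x) < idx (minlab ao (U M x.-1) (U M x)) by move: hlt; rewrite /lab prednK.
apply: leq_ltn_trans hlt'.
have [_ _ _ hmin] := minlab_spec (join_atom_covers la la').
by apply: hmin => //; rewrite leUr.
Qed.

Lemma sw_sub (M : seq L) x (g : {set L}) : maxchainP M -> 0 < x < n ->
  {subset g <= bot :: M} -> {subset g :\ U M x <= bot :: mk (sw M x)}.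
Proof.
move=> HM hx sub y /setD1P[yx yg].
have [ry ey] := mem_U HM (sub y yg).
have cf := sw_chainf HM hx.
have ryn : rk y <= n by rewrite -(maxchain_size HM).
have E : U (mk (sw M x)) (rk y) = y.
  rewrite U_mk //; last by case: cf.
  rewrite /sw; case: (eqVneq (rk y) x) => [E|_]; last by rewrite -ey.
  by move: yx; rewrite ey E eqxx.
by rewrite -E; apply: U_in; rewrite size_mk.
Qed.

Lemma first_incr (g : {set L}) M x : maxchainS rk s g -> is_first ao g M -> 0 < x < n ->
  x \notin s -> idx (lab M x.-1) < idx (lab M x).
Proof.
move=> Hg HF hx xs; have [HM sub Hmin] := HF.
have gsel := first_sel Hg HF.
have /andP[x0 xn] := hx.
have hp : x.-1 < x by lia.
rewrite ltn_neqAle (idx_lab_neq HM hp xn) /= leqNgt; apply/negP => hlt.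
have cf := sw_chainf HM hx.
have Ux : U M x \notin g.
  rewrite gsel inE negb_and orbC; apply/orP; left.
  by rewrite maxchain_rk // (maxchain_size HM) ltnW.
have sub' : {subset g <= bot :: mk (sw M x)}.
  move=> y yg; apply: (sw_sub HM hx sub); apply/setD1P; split => //.
  by apply/eqP => E; move: Ux; rewrite -E yg.
have := Hmin _ (mk_max cf) sub'; rewrite labword_mk // => hle.
have := lexle_lt_trans hle (sw_lt HM hx hlt); by rewrite lexlt_irr.
Qed.


Lemma sub_sel (M : seq L) (A : {set L}) : maxchainP M -> {subset A <= bot :: M} ->
  {in A, forall z, rk z \in s} -> A \subset sel M.
Proof.
move=> HM sub hs; apply/subsetP => z zA; rewrite inE hs // andbT.
have := sub z zA; rewrite inE => /orP[/eqP E|//].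
by have := hs z zA; rewrite E rk_bot => /s_range.
Qed.

Variable F : seq {set L}.
Hypothesis HFuniq : uniq F.
Hypothesis HFfacets : forall g : {set L}, (g \in F) = maxchainS rk s g.
Hypothesis HFlin : first_linext ao F.

Lemma earlier_not_whole j i : j < size F -> i < j -> nth set0 F j \subset nth set0 F i -> False.
Proof.
move=> jF ij sub.
have iF : i < size F by apply: ltn_trans ij jF.
have Hg : maxchainS rk s (nth set0 F j) by rewrite -HFfacets mem_nth.
have Hgi : maxchainS rk s (nth set0 F i) by rewrite -HFfacets mem_nth.
have /andP[_ /forallP hmax] := Hg.
have /andP[chi _] := Hgi.
have := hmax (nth set0 F i); rewrite chi sub /= => /eqP E.
by have := nth_uniq set0 iF jF HFuniq; rewrite E eqxx (ltn_eqF ij).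
Qed.

Lemma desc_hom j M : j < size F -> is_first ao (nth set0 F j) M ->
  (forall x, x \in s -> idx (lab M x) < idx (lab M x.-1)) -> homology_facet F j.
Proof.
move=> jF HF Hdesc.
set g := nth set0 F j.
have Hg : maxchainS rk s g by rewrite -HFfacets mem_nth.
have [HM subM HminM] := HF.
have gsel := first_sel Hg HF.
move=> G Gsub; split.
  case=> _ [i ij Gi]; apply/properP; split => //.
  case: (boolP (g \subset G)) => [gG|].
    by exfalso; apply: (earlier_not_whole jF ij); apply: subset_trans gG Gi.
  by move/subsetPn => [y yg yG]; exists y.
case/properP => _ [y yg yG].
have [xs ey] : rk y \in s /\ y = U M (rk y) by apply: sel_inv => //; rewrite -gsel.
set x := rk y in xs ey.
have hx := s_range xs.
have cf := sw_chainf HM hx.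
set g' := sel (mk (sw M x)).
have Hg' : maxchainS rk s g' := sel_maxS (mk_max cf).
have g'F : g' \in F by rewrite HFfacets.
set i := index g' F.
have iF : i < size F by rewrite index_mem.
have ni : nth set0 F i = g' by rewrite nth_index.
have Gg' : G \subset g'.
  apply: sub_sel; first exact: mk_max.
    move=> z zG; apply: (sw_sub HM hx subM); apply/setD1P; split; last by move/subsetP: Gsub; apply.
    by apply/eqP => E; move: yG; rewrite ey -E zG.
  move=> z zG; have /andP[/andP[/forall_inP h _] _] := Hg; apply: h.
  by move/subsetP: Gsub; apply.
have [M'' HF''] := first_exists (maxS_cmp Hg').
have [HM'' sub'' Hmin''] := HF''.
have selsub : {subset g' <= bot :: mk (sw M x)}.
  by move=> z; rewrite inE => /andP[zM _]; rewrite inE zM orbT.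
have hle := Hmin'' _ (mk_max cf) selsub; rewrite labword_mk // in hle.
have hlt : lexlt (labword ao M'') (labword ao M) := lexle_lt_trans hle (sw_lt HM hx (Hdesc x xs)).
case: (ltngtP i j) => [ij|ji|eij].
- split => //; exists i => //; by rewrite ni.
- exfalso; have := HFlin (i := j) (j := i) _ HF (Mj := M'').
  rewrite ni ji iF => /(_ isT HF'') /negP; exact.
- exfalso; have gg : g' = g by rewrite -ni eij.
  rewrite gg in sub''; have := HminM _ HM'' sub'' => h.
  by have := lexle_lt_trans h hlt; rewrite lexlt_irr.
Qed.

Lemma exists_prev x : 0 < x -> exists a, [/\ a < x, (a == 0) || (a \in s) &
  forall y, a < y -> y < x -> y \notin s].
Proof.
elim: x => // x IH _.
case: (eqVneq x 0) => [->|x0].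
  by exists 0; split => // y h1 h2; lia.
case: (boolP (x \in s)) => xs.
  by exists x; split => //; [rewrite xs orbT | move=> y h1 h2; lia].
have x0' : 0 < x by rewrite lt0n.
have [a [ax a0 anot]] := IH x0'.
exists a; split => //; first by apply: ltn_trans ax _.
move=> y ay yx; case: (eqVneq y x) => [->//|yx'].
by apply: anot => //; lia.
Qed.

Lemma exists_next_aux d x : x + d.+1 = n -> exists b, [/\ x < b, b <= n, (b == n) || (b \in s) &
  forall y, x < y -> y < b -> y \notin s].
Proof.
elim: d x => [|d IH] x E.
  by exists n; split; [lia | lia | rewrite eqxx | move=> y h1 h2; lia].
case: (boolP (x.+1 \in s)) => xs.
  by exists x.+1; split; [lia | lia | rewrite xs orbT | move=> y h1 h2; lia].
have E' : x.+1 + d.+1 = n by rewrite -E; lia.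
have [b [xb bn bs bnot]] := IH x.+1 E'.
exists b; split => //; first by lia.
move=> y h1 h2; case: (eqVneq y x.+1) => [->//|yx].
by apply: bnot => //; lia.
Qed.

Lemma exists_next x : x < n -> exists b, [/\ x < b, b <= n, (b == n) || (b \in s) &
  forall y, x < y -> y < b -> y \notin s].
Proof. by move=> xn; apply: (@exists_next_aux (n - x).-1); lia. Qed.

Lemma hom_desc j M : j < size F -> is_first ao (nth set0 F j) M -> homology_facet F j ->
  forall x, x \in s -> idx (lab M x) < idx (lab M x.-1).
Proof.
move=> jF HF Hhom x xs.
set g := nth set0 F j.
have Hg : maxchainS rk s g by rewrite -HFfacets mem_nth.
have [HM subM HminM] := HF.
have gsel := first_sel Hg HF.
have hx := s_range xs; have /andP[x0 xn] := hx.
have hp : x.-1 < x by lia.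
rewrite ltn_neqAle eq_sym (idx_lab_neq HM hp xn) /= leqNgt; apply/negP => asc.
have Uxg : U M x \in g by rewrite gsel; apply: sel_U.
set G := g :\ U M x.
have [_ [i ij Gi]] : earlier_face F j G.
  apply/(Hhom G (subD1set _ _)); apply/properP; split; first exact: subD1set.
  by exists (U M x) => //; rewrite !inE eqxx.
have iF : i < size F by apply: ltn_trans ij jF.
set g' := nth set0 F i.
have Hg' : maxchainS rk s g' by rewrite -HFfacets mem_nth.
have gneq : g' != g by rewrite /g' /g nth_uniq // (ltn_eqF ij).
have [M'' HF''] := first_exists (maxS_cmp Hg').
have [HM'' sub'' _] := HF''.
have g'sel := first_sel Hg' HF''.
have nlt : ~~ lexlt (labword ao M) (labword ao M'').
  by apply: (HFlin (i := i) (j := j)) => //; rewrite ij jF.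
apply: (negP nlt).
have szM := maxchain_size HM; have szM'' := maxchain_size HM''.
have agree : forall r, r \in s -> r != x -> U M r = U M'' r.
  move=> r rs rx; have /andP[r0 rn] := s_range rs.
  have rM : r <= size M by rewrite szM ltnW.
  have inG : U M r \in G.
    apply/setD1P; split; last by rewrite gsel; apply: sel_U.
    have xM : x <= size M by rewrite szM ltnW.
    apply/eqP => E; move: rx; have := maxchain_rk HM rM; rewrite E (maxchain_rk HM xM) => ->.
    by rewrite eqxx.
  have : U M r \in g' by move/subsetP: Gi; apply.
  rewrite g'sel => /(sel_inv HM'') [_ E].
  by rewrite (maxchain_rk HM rM) in E.
have top_eq : U M n = U M'' n.
  by have := maxchain_top HM; have := maxchain_top HM''; rewrite szM szM'' => -> ->.
have [a [ax a0s anot]] := exists_prev x0.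
have [b [xb bn bns bnot]] := exists_next xn.
have agA : U M a = U M'' a.
  case/orP: a0s => [/eqP->//|as_]; apply: agree => //; by rewrite (ltn_eqF ax).
have agB : U M b = U M'' b.
  case/orP: bns => [/eqP->//|bs_]; apply: agree => //; by rewrite (gtn_eqF xb).
have incr : forall q, a <= q -> q.+1 < b -> idx (lab M q) < idx (lab M q.+1).
  move=> q aq qb; case: (eqVneq q.+1 x) => [E|qx].
    by move: asc; rewrite -E.
  have qs : q.+1 \notin s.
    case: (ltngtP q.+1 x) => [lt|gt|eq]; first by apply: anot => //; lia.
      by apply: bnot.
    by rewrite eq eqxx in qx.
  have hq : 0 < q.+1 < n by rewrite ltn0Sn /= (leq_trans qb bn).
  exact: (first_incr Hg HF hq qs).
pose N r := if (a <= r) && (r <= b) then U M r else U M'' r.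
have NM : forall r, a <= r -> r <= b -> N r = U M r by move=> r h1 h2; rewrite /N h1 h2.
have NM'' : forall r, (r <= a) || (b <= r) -> N r = U M'' r.
  move=> r /orP[ra|br]; rewrite /N; case: ifP => // /andP[h1 h2].
    by have -> : r = a by apply/eqP; rewrite eqn_leq ra h1.
  by have -> : r = b by apply/eqP; rewrite eqn_leq br h2.
have cfN : chainf N.
  split.
  - by rewrite NM'' ?leq0n.
  - rewrite NM''; last by rewrite bn orbT.
    by have := maxchain_top HM''; rewrite szM''.
  - move=> r rn.
    have c1 : a <= r -> r < b -> covers (N r) (N r.+1).
      move=> ar rb; rewrite (NM r ar (ltnW rb)) (NM r.+1 (leqW ar) rb).
      by apply: (maxchain_cov HM); rewrite szM.
    have c2 : (r.+1 <= a) || (b <= r) -> covers (N r) (N r.+1).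
      move=> h.
      have h1 : (r <= a) || (b <= r) by case/orP: h => h; [rewrite (ltnW h) | rewrite h orbT].
      have h2 : (r.+1 <= a) || (b <= r.+1) by case/orP: h => h; [rewrite h | rewrite (leqW h) orbT].
      rewrite (NM'' r h1) (NM'' r.+1 h2).
      by apply: (maxchain_cov HM''); rewrite szM''.
    case: (leqP a r) => ar; case: (ltnP r b) => rb.
    + exact: c1.
    + by apply: c2; rewrite rb orbT.
    + by apply: c2; rewrite ar.
    + by apply: c2; rewrite ar.
have N0 : N 0 = bot by case: cfN.
have gsubN : {subset g <= bot :: mk N}.
  move=> y yg; have [ys ey] : rk y \in s /\ y = U M (rk y) by apply: sel_inv => //; rewrite -gsel.
  have /andP[r0 rn] := s_range ys.
  have E : U (mk N) (rk y) = y.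
    rewrite U_mk //; last exact: ltnW.
    case: (boolP ((a <= rk y) && (rk y <= b))) => [/andP[h1 h2]|]; first by rewrite NM.
    rewrite negb_and -!ltnNge => h.
    rewrite NM''; last by case/orP: h => h; [rewrite (ltnW h) | rewrite (ltnW h) orbT].
    have rx : rk y != x.
      apply/eqP => E; move: h; rewrite E => /orP[h|h].
        by move: (ltn_trans h ax); rewrite ltnn.
      by move: (ltn_trans xb h); rewrite ltnn.
    by rewrite -(agree (rk y) ys rx) -ey.
  by rewrite -E; apply: U_in; rewrite size_mk ltnW.
have hle := HminM _ (mk_max cfN) gsubN; rewrite labword_mk // in hle.
apply: (lexle_lt_trans hle); rewrite (labword_U HM'').
have hxN : N x != U M'' x.
  rewrite NM ?(ltnW ax) ?(ltnW xb) //; apply/eqP => E.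
  have gsub'' : {subset g <= bot :: M''}.
    move=> y yg; case: (eqVneq y (U M x)) => [->|yx].
      by rewrite E; apply: U_in; rewrite szM'' ltnW.
    apply: sub''; move/subsetP: Gi; apply; apply/setD1P; split => //.
  have := sel_eq Hg HM'' gsub''; rewrite -g'sel => E2.
  by move: gneq; rewrite E2 eqxx.
have ex : exists r, N r != U M'' r by exists x.
case: (ex_minnP ex) => m Nm mmin.
have mx : m <= x := mmin x hxN.
have am : a < m.
  by rewrite ltnNge; apply/negP => ma; move: Nm; rewrite NM'' ?ma // eqxx.
have m0 : 0 < m by apply: leq_ltn_trans (leq0n a) am.
have mb : m < b by apply: leq_ltn_trans mx xb.
have mn : m <= n by apply: leq_trans (ltnW mb) bn.
have agreeN : forall r, r < m -> N r = U M'' r.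
  move=> r rm; apply/eqP; case: (eqVneq (N r) (U M'' r)) => // H.
  by have := mmin r H; rewrite leqNgt rm.
have mp : m.-1 < m by rewrite ltn_predL.
apply: (lexlt_map (r := m.-1)).
- by rewrite leq0n add0n (leq_trans mp mn).
- move=> q /andP[_ qm].
  rewrite !agreeN //; first by apply: leq_ltn_trans qm mp.
  by apply: ltn_trans qm mp.
rewrite prednK //.
have am1 : a <= m.-1 by rewrite -ltnS prednK.
have e1 : N m.-1 = U M m.-1 := NM m.-1 am1 (leq_trans (ltnW mp) (ltnW mb)).
have e2 : N m = U M m := NM m (ltnW am) (ltnW mb).
have e3 : U M m.-1 = U M'' m.-1 by rewrite -e1 agreeN.
rewrite e1 e2 -e3.
have cov'' : covers (U M m.-1) (U M'' m).
  have m1n'' : m.-1 < size M'' by rewrite szM'' (leq_trans mp mn).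
  by rewrite e3; have := maxchain_cov HM'' m1n''; rewrite prednK.
have [ca cb cc _] := minlab_spec cov''.
have cUb : (minlab ao (U M m.-1) (U M'' m) <= U M b)%O.
  by rewrite agB; apply: le_trans cb _; apply: U_mono => //; [exact: ltnW | rewrite szM''].
have gr := greedy HM am1 (ltn_trans mp mb) bn incr ca cUb cc.
rewrite /lab prednK // in gr.
rewrite ltn_neqAle gr andbT; apply/negP => /eqP E.
have m1n : m.-1 < n by apply: leq_trans mp mn.
have [la _ _ _] := lab_spec HM m1n.
rewrite /lab prednK // in la.
have E2 := idx_inj la ca E.
have := lab_join HM m1n; rewrite /lab prednK // E2 (covers_join cov'' ca cb cc) => E3.
by move: Nm; rewrite e2 -E3 eqxx.
Qed.

Lemma join_take (M : seq L) j : maxchainP M -> j <= n ->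
  \big[Order.join/Order.bottom]_(y <- take j (labels ao M)) y = U M j.
Proof.
move=> HM; have szM := maxchain_size HM.
have szl : size (labels ao M) = n by rewrite size_pairmap.
elim: j => [|j IH] jn; first by rewrite take0 big_nil.
rewrite (take_nth bot); last by rewrite szl.
rewrite -cats1 big_cat big_seq1 IH; last exact: ltnW.
rewrite labels_lab (nth_map 0) ?size_iota ?szM // nth_iota // add0n.
exact: lab_join.
Qed.

Lemma nth_labels (M : seq L) k : maxchainP M -> k < n -> nth bot (labels ao M) k = lab M k.
Proof.
move=> HM kn; have szM := maxchain_size HM.
by rewrite labels_lab (nth_map 0) ?size_iota ?szM // nth_iota.
Qed.

Lemma labels_nbc (M : seq L) : maxchainP M -> nbc_plus rk ao (labels ao M).
Proof.
move=> HM; have szM := maxchain_size HM.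
have szl : size (labels ao M) = n by rewrite size_pairmap.
have Jtop : \big[Order.join/Order.bottom]_(y <- labels ao M) y = top.
  have := join_take HM (leqnn n); rewrite -szl take_size szl => ->.
  by have := maxchain_top HM; rewrite szM.
have inl : forall a, a \in labels ao M -> exists2 k, k < n & a = lab M k.
  move=> a; rewrite labels_lab szM => /mapP [k]; rewrite mem_iota add0n => /andP[_ kn] ->.
  by exists k.
split; last split.
- split.
  + by apply/allP => a /inl [k kn ->]; case: (lab_spec HM kn).
  + rewrite labels_lab szM map_inj_in_uniq ?iota_uniq // => p q.
    rewrite !mem_iota !add0n => /andP[_ pn] /andP[_ qn] E.
    case: (ltngtP p q) => // [pq|qp].
      by move: (lab_neq HM pq qn); rewrite E eqxx.
    by move: (lab_neq HM qp pn); rewrite E eqxx.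
  + by rewrite Jtop szl.
  + move=> a Ha anot aJ.
    have P0 : ~~ (a <= U M 0)%O.
      case/andP: Ha => ba _; apply/negP => h.
      by have := lt_le_trans ba h; rewrite ltxx.
    have Pn : (a <= U M n)%O by have := maxchain_top HM; rewrite szM => ->; exact: lex1.
    have [q [_ qn nq pq]] := crossing (P := fun t => (a <= U M t)%O) (leq0n n) P0 Pn.
    have [la _ _ hmin] := lab_spec HM qn.
    exists (lab M q).
      by rewrite labels_lab szM map_f // mem_iota add0n.
    rewrite /aord -/(idx _) -/(idx a) ltn_neqAle hmin // andbT.
    apply/eqP => E; move: anot; rewrite -(idx_inj la Ha E) labels_lab szM map_f //.
    by rewrite mem_iota add0n.
- by rewrite szl.
- move=> j; rewrite szl => jn.
  by rewrite nth_labels // !join_take // ltnW.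
Qed.

Hypothesis Hsort : sorted ltn s.

Lemma main_equiv j : j < size F ->
  (homology_facet F j <->
   exists M : seq L,
     [/\ is_first ao (nth set0 F j) M,
         standard_filling ao (rib_comp n s) (rib_fill (labels ao M)) &
         nbc_plus rk ao (labels ao M)]).
Proof.
move=> jF.
have Hg : maxchainS rk s (nth set0 F j) by rewrite -HFfacets mem_nth.
have gfact : forall M, maxchainP M -> forall k, k < n ->
    index (rib_fill (labels ao M) k) ao = idx (lab M k).
  by move=> M HM k kn; rewrite /rib_fill nth_labels.
split.
- move=> Hhom; have [M HF] := first_exists (maxS_cmp Hg).
  have [HM _ _] := HF.
  exists M; split => //; last exact: labels_nbc.
  have desc := hom_desc jF HF Hhom.
  have : stdg n s (fun k => index (rib_fill (labels ao M) k) ao).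
    apply: rib_R2 => //.
      move=> x xs; have /andP[x0 xn] := s_range xs.
      have x1n : x.-1 < n by apply: leq_ltn_trans (leq_pred x) xn.
      by rewrite !gfact //; apply: desc.
    move=> x /andP[x0 xn] xs.
    have x1n : x.-1 < n by apply: leq_ltn_trans (leq_pred x) xn.
    rewrite !gfact //; apply: (first_incr Hg HF) => //.
    by rewrite x0 xn.
  by [].
- case=> M [HF Hstd _]; have [HM _ _] := HF.
  apply: (desc_hom jF HF) => x xs.
  have /andP[x0 xn] := s_range xs.
  have x1n : x.-1 < n by apply: leq_ltn_trans (leq_pred x) xn.
  have := rib_R1 Hsort Hs (g := fun k => index (rib_fill (labels ao M) k) ao) Hstd xs.
  by rewrite /= !gfact.
Qed.

End Basic.


Theorem proposition5p20 (disp : Order.disp_t) (L : finTBLatticeType disp)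
  (rk : L -> nat) (n : nat) (ao : seq L) (s : seq nat)
  (Hgeom : geometric rk) (Hn : rk Order.top = n)
  (Hao : atom_ordering ao)
  (Hs_sorted : sorted ltn s) (Hs_range : all (fun x => 0 < x < n) s)
  (F : seq {set L})
  (HFuniq : uniq F) (HFfacets : forall g : {set L}, (g \in F) = maxchainS rk s g)
  (HFlin : first_linext ao F) (HFshell : shelling F) :
  forall j, j < size F ->
    (homology_facet F j <->
     exists M : seq L,
       [/\ is_first ao (nth set0 F j) M,
           standard_filling ao (rib_comp n s) (rib_fill (labels ao M)) &
           nbc_plus rk ao (labels ao M)]).
Proof.
move=> j jF; subst n.
exact: (main_equiv (Hgeom.1) Hgeom Hao Hs_range HFuniq HFfacets HFlin Hs_sorted jF).
Qed.
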